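(* Let $n\ge1$, $\mathcal{I}=\mathbb{Z}_{\ge1}$, $\Gamma_l=\{x\in\mathbb{Z}^n_{\ge0}\mid\sum_{i=1}^nx_i=l\}$ for $l\in\mathcal{I}$, and let $\pi_l$ be probability distributions on $\Gamma_l$ strictly positive on every element. Suppose: (a) whenever $x,x+e_j-e_k\in\Gamma_i$ and $y,y+e_j-e_k\in\Gamma_{i+1}$ ($i\in\mathcal{I}$) with $x_j=y_j$, $x_k=y_k$, we have $\frac{\pi_i(x+e_j-e_k)}{\pi_i(x)}=\frac{\pi_{i+1}(y+e_j-e_k)}{\pi_{i+1}(y)}$; (b) for each $i\in\mathcal{I}$ there is a constant $a_i$ depending only on $i$ such that whenever $x\in\Gamma_i$, $x+e_j,y\in\Gamma_{i+1}$, $y+e_j\in\Gamma_{i+2}$ with $x_j=y_j$, we have $\frac{\pi_{i+1}(x+e_j)}{\pi_i(x)}=a_i\frac{\pi_{i+2}(y+e_j)}{\pi_{i+1}(y)}$. Then the family $(\Gamma_l,\pi_l)_{l\in\mathcal{I}}$ has product-form distribution: there exist $f_i:\mathbb{Z}_{\ge0}\to\mathbb{R}_{>0}$, $i=1,\dots,n$, with $\pi_l(x)=Z_l^{-1}\prod_{i=1}^nf_i(x_i)$ for all $l\in\mathcal{I}$ and $x\in\Gamma_l$, where $Z_l=\sum_{x\in\Gamma_l}\prod_if_i(x_i)$.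
   Context: $e_j$ denotes the $j$-th standard basis vector of $\mathbb{Z}^n$. *)

(* Defs.v *)
From HB Require Import structures.
From mathcomp Require Import all_boot all_order all_algebra.
Set Implicit Arguments. Unset Strict Implicit. Unset Printing Implicit Defensive.
Import Order.TTheory GRing.Theory Num.Theory.
Local Open Scope ring_scope.

Notation vecZ n := {ffun 'I_n -> int}.

Definition ebasis (n : nat) (j : 'I_n) : vecZ n := [ffun i => ((i == j) : nat)%:Z].

Definition inGamma (n l : nat) (x : vecZ n) : bool :=
  [forall i, 0 <= x i] && (\sum_i x i == l%:Z).

(* Explicit duplicate-free enumeration of Gamma_l *)
Definition Gamma_seq (n l : nat) : seq (vecZ n) :=
  map (fun y : {ffun 'I_n -> 'I_l.+1} => [ffun i => (val (y i))%:Z])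
    (enum [pred y : {ffun 'I_n -> 'I_l.+1} | (\sum_i (val (y i)) == l)%N]).

Definition Zconst {R : realFieldType} (n l : nat) (f : 'I_n -> nat -> R) : R :=
  \sum_(x <- Gamma_seq n l) \prod_i f i `|x i|%N.

(* Main.v *)
Require Import Defs.
From HB Require Import structures.
From mathcomp Require Import all_boot all_order all_algebra.
From mathcomp Require Import ring lra zify.
From Stdlib Require Import ClassicalEpsilon.
Import Order.TTheory GRing.Theory Num.Theory.
Local Open Scope ring_scope.

Lemma inGammaP n l (x : vecZ n) :
  reflect ((forall i, 0 <= x i) /\ \sum_i x i = l%:Z) (inGamma l x).
Proof.
apply: (iffP andP) => [[/forallP H /eqP S]|[H S]]; split => //.
  by apply/forallP.
by apply/eqP.
Qed.

Lemma ebasisE n (j i : 'I_n) : ebasis j i = ((i == j) : nat)%:Z.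
Proof. by rewrite /ebasis ffunE. Qed.

Lemma sum_ebasis n (j : 'I_n) : \sum_i ebasis j i = 1.
Proof.
rewrite (bigD1 j) //= big1 ?addr0; first by rewrite ebasisE eqxx.
by move=> i /negbTE ij; rewrite ebasisE ij.

Qed.

Lemma inGamma_add n l (x : vecZ n) j : inGamma l x -> inGamma l.+1 (x + ebasis j).
Proof.
move/inGammaP=> [H S]; apply/inGammaP; split.
  move=> i; rewrite ffunE ebasisE; have := H i; case: (i == j) => /=; lia.
rewrite (eq_bigr (fun i => x i + ebasis j i)); last by move=> i; rewrite ffunE.
rewrite big_split /= S sum_ebasis; lia.
Qed.

Lemma inGamma_sub n l (x : vecZ n) j : inGamma l.+1 x -> 0 < x j ->
  inGamma l (x - ebasis j).
Proof.
move/inGammaP=> [H S] xj; apply/inGammaP; split.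
  move=> i; rewrite !ffunE; have := H i.
  have [->|_] := eqVneq i j => /=; lia.
rewrite (eq_bigr (fun i => x i - ebasis j i)); last by move=> i; rewrite !ffunE.
rewrite sumrB /= S sum_ebasis; lia.
Qed.

Lemma inGamma0 n (w : vecZ n) : inGamma 0 w -> w = 0.
Proof.
move/inGammaP=> [H S]; apply/ffunP => i; rewrite ffunE.
by apply: (psumr_eq0P _ S) => // k _; apply: H.
Qed.

Lemma exists_pos n l (z : vecZ n) j : inGamma l z -> z j < l%:Z ->
  exists2 k, k != j & 0 < z k.
Proof.
move=> /inGammaP [H S] lt.
have [/existsP [k /andP [kj zk]]|/existsPn N] :=
  boolP [exists k, (k != j) && (0 < z k)]; first by exists k.
exfalso; move: S; rewrite (bigD1 j) //= big1 ?addr0 => [Sj|k kj].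
  by rewrite Sj ltxx in lt.
have := N k; rewrite kj /= -leNgt => zk; by apply/eqP; rewrite eq_le zk H.
Qed.

Definition corner {n} (m : nat) (k : 'I_n) : vecZ n :=
  [ffun i => if i == k then m%:Z else 0].

Lemma inGamma_corner n m (k : 'I_n) : inGamma m (corner m k).
Proof.
apply/inGammaP; split.
  by move=> i; rewrite ffunE; case: (i == k).
rewrite (bigD1 k) //= big1 ?addr0 => [|i /negbTE ik]; rewrite ffunE ?eqxx ?ik //.
Qed.

Lemma ebasis_corner n (j : 'I_n) : ebasis j = corner 1 j.
Proof. by apply/ffunP => i; rewrite ebasisE ffunE; case: (i == j). Qed.

Lemma dichotomy n l (z : vecZ n) : inGamma l z -> (1 <= l)%N ->
  (exists k, z = corner l k) \/ (exists j, 0 < z j < l%:Z).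
Proof.
move=> zG l1; have /inGammaP [H S] := zG.
have [k zk] : exists k, 0 < z k.
  have [/existsP [k zk]|/existsPn N] := boolP [exists k, 0 < z k]; first by exists k.
  exfalso; move: S; rewrite big1; first lia.
  by move=> k _; have := N k; rewrite -leNgt => zk; apply/eqP; rewrite eq_le zk H.
have [lt|ge] := ltP (z k) l%:Z; first by right; exists k; rewrite zk lt.
left; exists k.
move: S; rewrite (bigD1 k) //=; set T := (X in _ + X = _) => S.
have T0 : 0 <= T by apply: sumr_ge0 => i _; apply: H.
have T00 : T = 0 by lia.
have zkl : z k = l%:Z by lia.
apply/ffunP => i; rewrite ffunE.
have [->|ik] := eqVneq i k; first by [].
rewrite ?(negbTE ik).
by apply: (psumr_eq0P _ T00) => // i' _; apply: H.
Qed.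

Lemma Gamma_seq_in n l (w : vecZ n) : w \in Gamma_seq n l -> inGamma l w.
Proof.
move=> /mapP [y]; rewrite mem_enum inE => /eqP S ->.
apply/inGammaP; split => [i|]; first by rewrite ffunE.
rewrite (eq_bigr (fun i => (val (y i))%:Z)) => [|i _]; last by rewrite ffunE.
by rewrite -(big_morph Posz PoszD (erefl 0%:Z)); exact: (congr1 Posz S).
Qed.

Arguments dichotomy {n l z}.
Arguments exists_pos {n l z j}.
Arguments inGamma_sub {n l x j}.
Arguments inGamma0 {n w}.
Arguments inGamma_add {n l x} j.
Arguments Gamma_seq_in {n l w}.

Section Prod.
Variable (R : realFieldType) (n : nat) (f : 'I_n -> nat -> R).

Lemma P_corner m k : (forall i, f i 0 = 1) -> \prod_i f i `|corner m k i|%N = f k m.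
Proof.
move=> f0; rewrite (bigD1 k) //= big1 ?mulr1 => [|i /negbTE ik];
  rewrite ffunE ?eqxx ?ik //.
Qed.

Lemma P_identity (a b c d : vecZ n) :
  (forall i, f i `|a i|%N * f i `|b i|%N = f i `|c i|%N * f i `|d i|%N) ->
  (\prod_i f i `|a i|%N) * (\prod_i f i `|b i|%N) =
  (\prod_i f i `|c i|%N) * (\prod_i f i `|d i|%N).
Proof. by move=> E; rewrite -!big_split; apply: eq_bigr => i _; apply: E. Qed.

Lemma swapF i (a b c d : int) : (a = c /\ b = d) \/ (a = d /\ b = c) ->
  f i `|a|%N * f i `|b|%N = f i `|c|%N * f i `|d|%N.
Proof. by case=> [[-> ->]|[-> ->]] //; rewrite mulrC. Qed.
End Prod.

Fixpoint cseq {R : fieldType} (c2 : R) (a : nat -> R) (m : nat) : R * R :=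
  if m is m'.+1 then let p := cseq c2 a m' in (p.2, p.2 ^+ 2 / (a m'.+1 * p.1))
  else (1, c2).

Lemma cseq_pos (R : realFieldType) (c2 : R) a m : 0 < c2 -> (forall i, 0 < a i) ->
  0 < (cseq c2 a m).1 /\ 0 < (cseq c2 a m).2.
Proof.
move=> c2p ap; elim: m => [|m [IH1 IH2]] /=; first by split.
split => //; apply: divr_gt0; first exact: exprn_gt0.
exact: mulr_gt0.
Qed.

Theorem proposition6p5 (R : realFieldType) (n : nat) (hn : (1 <= n)%N)
  (pi : nat -> vecZ n -> R)
  (hpos : forall l : nat, (1 <= l)%N -> forall x, inGamma l x -> 0 < pi l x)
  (hsum : forall l : nat, (1 <= l)%N -> \sum_(x <- Gamma_seq n l) pi l x = 1)
  (ha : forall i : nat, (1 <= i)%N -> forall (j k : 'I_n) (x y : vecZ n),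
      inGamma i x -> inGamma i (x + ebasis j - ebasis k) ->
      inGamma i.+1 y -> inGamma i.+1 (y + ebasis j - ebasis k) ->
      x j = y j -> x k = y k ->
      pi i (x + ebasis j - ebasis k) / pi i x
        = pi i.+1 (y + ebasis j - ebasis k) / pi i.+1 y)
  (hb : forall i : nat, (1 <= i)%N -> exists a : R,
      forall (j : 'I_n) (x y : vecZ n),
      inGamma i x -> inGamma i.+1 (x + ebasis j) ->
      inGamma i.+1 y -> inGamma i.+2 (y + ebasis j) ->
      x j = y j ->
      pi i.+1 (x + ebasis j) / pi i x = a * (pi i.+2 (y + ebasis j) / pi i.+1 y)) :
  exists f : 'I_n -> nat -> R,
    (forall (i : 'I_n) (m : nat), 0 < f i m) /\
    (forall l : nat, (1 <= l)%N -> forall x : vecZ n, inGamma l x ->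
       pi l x = (Zconst l f)^-1 * \prod_i f i `|x i|%N).
Proof.
case: n hn pi hpos hsum ha hb => [//|n] _ pi hpos hsum ha hb.
have /choice [a Ha] : forall i, exists a : R, (1 <= i)%N ->
      forall (j : 'I_n.+1) (x y : vecZ n.+1),
      inGamma i x -> inGamma i.+1 (x + ebasis j) ->
      inGamma i.+1 y -> inGamma i.+2 (y + ebasis j) ->
      x j = y j ->
      pi i.+1 (x + ebasis j) / pi i x = a * (pi i.+2 (y + ebasis j) / pi i.+1 y).
  move=> i; case: (leqP 1 i) => [/hb [a Ha]|_]; first by exists a.
  by exists 0.
clear hb.
pose a' i := if 0 < a i then a i else 1.
have a'pos : forall i, 0 < a' i by move=> i; rewrite /a'; case: ifP.
pose i1 : 'I_n.+1 := inord 1.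
pose g (p q : 'I_n.+1) := pi 2%N (ebasis p + ebasis q) /
   (pi 1%N (ebasis p) * pi 1%N (ebasis q)).
have G0 : inGamma 0 (0 : vecZ n.+1).
  by apply/inGammaP; split=> [i|]; rewrite ?ffunE ?big1 // => i _; rewrite ffunE.
have G1 : forall p : 'I_n.+1, inGamma 1 (ebasis p).
  by move=> p; rewrite -[ebasis p]add0r; exact: inGamma_add.
have G2 : forall p q : 'I_n.+1, inGamma 2 (ebasis p + ebasis q).
  by move=> p q; exact: inGamma_add.
have pn0 : forall l x, (1 <= l)%N -> inGamma l x -> pi l x != 0.
  by move=> l x l1 xG; rewrite lt0r_neq0 // hpos.
have gpos : forall p q : 'I_n.+1, 0 < g p q.
  by move=> p q; rewrite /g divr_gt0 ?mulr_gt0 ?hpos.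
pose c m := (cseq (g ord0 i1) a' m.-1).1.
have cpos : forall m, 0 < c m.
  by move=> m; rewrite /c; case: (@cseq_pos _ _ _ m.-1 (gpos ord0 i1) a'pos).
pose f (k : 'I_n.+1) m := if m == 0%N then 1 else pi m (corner m k) / c m.
have fpos : forall k m, 0 < f k m.
  move=> k m; rewrite /f; case: eqP => // /eqP m0.
  by rewrite divr_gt0 ?cpos ?hpos ?inGamma_corner // lt0n.
have f0 : forall k, f k 0%N = 1 by [].
pose P (x : vecZ n.+1) := \prod_i f i `|x i|%N.
have Ppos : forall x, 0 < P x by move=> x; apply: prodr_gt0 => i _.
have Hcorner : forall m k, (1 <= m)%N -> pi m (corner m k) = c m * P (corner m k).
  move=> m k m1; rewrite /P P_corner // /f; case: eqP => [m0|_]; first by rewrite m0 in m1.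
  by rewrite mulrC divfK // lt0r_neq0.
have gL : forall p q r : 'I_n.+1, p != q -> p != r -> q != r -> g p r = g q r.
  move=> p q r pq pr qr.
  have := ha 1%N isT p q (ebasis q) (ebasis q + ebasis r) (G1 q).
  have E1 : ebasis q + ebasis p - ebasis q = ebasis p.
    by apply/ffunP => i; rewrite !ffunE; lia.
  have E2 : ebasis q + ebasis r + ebasis p - ebasis q = ebasis p + ebasis r.
    by apply/ffunP => i; rewrite !ffunE; lia.
  rewrite E1 E2 => /(_ (G1 p) (G2 q r) (G2 p r)).
  have X1 : ebasis q p = (ebasis q + ebasis r) p.
    by rewrite !ffunE (negbTE pq) (negbTE pr).
  have X2 : ebasis q q = (ebasis q + ebasis r) q.
    by rewrite !ffunE eqxx (negbTE qr).
  move=> /(_ X1 X2) H.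
  rewrite /g.
  have -> : pi 2%N (ebasis p + ebasis r) =
     pi 2%N (ebasis p + ebasis r) / pi 2%N (ebasis q + ebasis r) * pi 2%N (ebasis q + ebasis r).
    by rewrite divfK // pn0.
  by rewrite -H; field; rewrite !pn0.
have gS : forall p q : 'I_n.+1, g p q = g q p.
  by move=> p q; rewrite /g addrC [pi 1%N _ * _]mulrC.
have g0 : forall k, k != ord0 -> g ord0 k = g ord0 i1.
  move=> k k0.
  have n0 : (0 < n)%N.
    by have := ltn_ord k; move: k0; rewrite -val_eqE /=; lia.
  have i10 : i1 != ord0.
    by apply/eqP => /(congr1 val) /=; rewrite inordK //; lia.
  have [->//|ki] := eqVneq k i1.
  by rewrite gS (gL k i1 ord0) // gS.
have gE : forall j k, j != k -> g j k = g ord0 i1.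
  move=> j k jk.
  have [j0|j0] := eqVneq j ord0; first by rewrite j0 g0 // -j0 eq_sym.
  have [k0|k0] := eqVneq k ord0; first by rewrite k0 gS g0.
  by rewrite (gL j ord0 k) // ?g0 // eq_sym.
have P0 : P 0 = 1 by rewrite /P big1 // => i _; rewrite ffunE.
have Pe : forall k, P (ebasis k) = pi 1%N (ebasis k).
  move=> k; rewrite /P ebasis_corner P_corner // /f /= /c /=.
  by rewrite divr1.
have main : forall m, (forall z, inGamma m.+1 z -> pi m.+1 z = c m.+1 * P z) /\
    (forall z, inGamma m.+2 z -> pi m.+2 z = c m.+2 * P z).
  elim => [|m [IH1 IH2]].
    split.
      move=> z zG; case: (dichotomy zG isT) => [[k ->]|[j /andP[lo hi]]].
        exact: Hcorner.
      lia.
    move=> z zG; case: (dichotomy zG isT) => [[k ->]|[j /andP[lo hi]]].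
      exact: Hcorner.
    have [k kj zk] := exists_pos zG hi.
    have yk : 0 < (z - ebasis j) k by rewrite !ffunE (negbTE kj) /=; lia.
    have w0 := inGamma0 (inGamma_sub (inGamma_sub zG lo) yk).
    have ez : z = ebasis k + ebasis j.
      apply/ffunP => i; have := congr1 (fun w : vecZ n.+1 => w i) w0; rewrite !ffunE /=; lia.
    rewrite ez.
    have PE : P (ebasis k + ebasis j) = pi 1%N (ebasis k) * pi 1%N (ebasis j).
      rewrite -Pe -Pe -[P (_ + _)]mulr1 -P0; apply: P_identity => i; apply: swapF.
      rewrite !ffunE.
      have [->|ik] := eqVneq i k; first by rewrite (negbTE kj) /=; left.
      by right; split; lia.
    have c2 : c 2%N = g ord0 i1 by [].
    rewrite PE c2 -(gE k j kj) /g.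
    by field; rewrite !pn0.
  split; first exact: IH2.
  move=> z zG; case: (dichotomy zG isT) => [[k ->]|[j /andP[lo hi]]].
    exact: Hcorner.
  have [k kj zk] := exists_pos zG hi.
  have jk : j != k by rewrite eq_sym.
  set y := z - ebasis j.
  set x := y - ebasis k.
  have yG : inGamma m.+2 y := inGamma_sub zG lo.
  have yk : 0 < y k by rewrite /y !ffunE (negbTE kj) /=; lia.
  have xG : inGamma m.+1 x := inGamma_sub yG yk.
  have yz : y + ebasis j = z by rewrite /y subrK.
  have xy : x j = y j by rewrite /x !ffunE (negbTE jk) /=; lia.
  have := Ha m.+1 isT j x y xG (inGamma_add j xG) yG; rewrite yz => /(_ zG xy) H.
  have apos : 0 < a m.+1.
    have : 0 < pi m.+2 (x + ebasis j) / pi m.+1 x.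
      by rewrite divr_gt0 // hpos // inGamma_add.
    by rewrite H pmulr_lgt0 // divr_gt0 // hpos.
  have a'E : a' m.+1 = a m.+1 by rewrite /a' apos.
  have HZ : pi m.+3 z = pi m.+2 (x + ebasis j) / pi m.+1 x * pi m.+2 y / a m.+1.
    by rewrite H; field; rewrite lt0r_neq0 // pn0.
  rewrite HZ (IH1 x xG) (IH2 _ (inGamma_add j xG)) (IH2 y yG).
  have PI : P (x + ebasis j) * P y = P x * P z.
    apply: P_identity => i; apply: swapF.
    rewrite /x /y !ffunE.
    have [->|ij] := eqVneq i j.
      by rewrite (negbTE jk) /=; right; split; lia.
    by left; rewrite /= !subr0 ?addr0.
  have cE : c m.+3 = c m.+2 ^+ 2 / (a' m.+1 * c m.+1) by [].
  rewrite cE a'E.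
  move: (cpos m.+1) (cpos m.+2) (Ppos x) (Ppos y) (Ppos z) (Ppos (x + ebasis j)) PI apos.
  generalize (c m.+1) (c m.+2) (P x) (P y) (P z) (P (x + ebasis j)) (a m.+1).
  move=> C1 C2 Px Py Pz Pa am C1p C2p Pxp Pyp Pzp Pap PI apos.
  have -> : C2 * Pa / (C1 * Px) * (C2 * Py) / am
     = C2 ^+ 2 / (am * C1) * (Pa * Py) / Px.
    by field; rewrite !lt0r_neq0.
  by rewrite PI; field; rewrite !lt0r_neq0.
have Q : forall l, (1 <= l)%N -> forall z, inGamma l z -> pi l z = c l * P z.
  by case=> [//|m] _; exact: (main m).1.
exists f; split; first exact: fpos.
move=> l l1 x xG.
have Zc : Zconst l f = (c l)^-1.
  rewrite /Zconst.
  have -> : \sum_(w <- Gamma_seq n.+1 l) \prod_i f i `|w i|%N =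
            \sum_(w <- Gamma_seq n.+1 l) pi l w / c l.
    apply: eq_big_seq => w /Gamma_seq_in wG.
    by rewrite (Q l l1 w wG) mulrC mulKf // lt0r_neq0.
  by rewrite -mulr_suml hsum // mul1r.
by rewrite Zc invrK (Q l l1 x xG).
Qed.
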